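(* For all $n\geq 1$ and $m\geq 2$, \[2\bar{a}_m(n)=\bar{a}_{m-1}(2n,n).\]
   Context: An overpartition of $n$ is a partition of $n$ in which the first occurrence of each distinct part value may be overlined; an overlined part and a non-overlined part of the same value count as equal. $\bar{a}_m(n)$ is the number of overpartitions of $n$ in which the smallest part value occurs at least $m$ times, and $\bar{a}_m(N,\ell)$ is the number of overpartitions of $N$ in which the smallest part value occurs at least $m$ times and the largest part minus the smallest part equals $\ell$. *)

(* Defs.v *)
From mathcomp Require Import all_boot.
Set Implicit Arguments. Unset Strict Implicit. Unset Printing Implicit Defensive.

(* An overpartition of N is encoded by its multiplicity data: for each part
   value v (0 <= v <= N), a pair (multiplicity of v, whether the first
   occurrence of v is overlined).  Multiplicities of positive parts of a
   partition of N are at most N, so 'I_N.+1 suffices. *)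
Definition opdata (N : nat) := {ffun 'I_N.+1 -> 'I_N.+1 * bool}.

Definition mult N (f : opdata N) (v : 'I_N.+1) : nat := (f v).1.
Definition overlined N (f : opdata N) (v : 'I_N.+1) : bool := (f v).2.

Definition is_overpartition N (f : opdata N) : bool :=
  [&& [forall v : 'I_N.+1, (v == 0 :> nat) ==> (mult f v == 0) && ~~ overlined f v],
      [forall v : 'I_N.+1, overlined f v ==> (0 < mult f v)] &
      \sum_(v < N.+1) v * mult f v == N].

Definition is_smallest_part N (f : opdata N) (s : 'I_N.+1) : bool :=
  (0 < mult f s) && [forall v : 'I_N.+1, (v < s) ==> (mult f v == 0)].

Definition is_largest_part N (f : opdata N) (l : 'I_N.+1) : bool :=
  (0 < mult f l) && [forall v : 'I_N.+1, (l < v) ==> (mult f v == 0)].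

Definition abar (m N : nat) : nat :=
  #|[set f : opdata N | is_overpartition f &&
      [exists s : 'I_N.+1, is_smallest_part f s && (m <= mult f s)]]|.

Definition abar2 (m N l : nat) : nat :=
  #|[set f : opdata N | is_overpartition f &&
      [exists s : 'I_N.+1, exists t : 'I_N.+1,
         [&& is_smallest_part f s, is_largest_part f t, m <= mult f s &
             (t - s == l)%N]]]|.

(* Main.v *)
Require Import Defs.
From mathcomp Require Import all_boot zify.
Set Implicit Arguments. Unset Strict Implicit. Unset Printing Implicit Defensive.

Definition mn N (f : opdata N) (v : nat) : nat := mult f (inord v).

Lemma mnE N (f : opdata N) (v : 'I_N.+1) : mn f v = mult f v.
Proof. by rewrite /mn inord_val. Qed.

Lemma sumE N (f : opdata N) :
  \sum_(v < N.+1) v * mult f v = \sum_(v < N.+1) v * mn f v.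
Proof. by apply: eq_bigr => v _; rewrite mnE. Qed.

Lemma sum_delta K a : a < K -> \sum_(v < K) v * (v == a :> nat) = a.
Proof.
move=> aK; rewrite (bigD1 (Ordinal aK)) //= eqxx muln1 big1 ?addn0 // => i.
by rewrite -val_eqE /= => /negbTE ->; rewrite muln0.
Qed.

Lemma sum_widen N K (h : nat -> nat) : N <= K ->
  \sum_(v < K.+1) v * (if v <= N then h v else 0) = \sum_(v < N.+1) v * h v.
Proof.
move=> NK.
rewrite -(big_mkord xpredT (fun v => v * (if v <= N then h v else 0))).
rewrite -(big_mkord xpredT (fun v => v * h v)).
rewrite (big_cat_nat _ (n := N.+1)) //= [X in _ + X]big_nat_cond.
rewrite [X in _ + X]big1 ?addn0; last first.
  by move=> i /andP [/andP [H1 _] _]; rewrite leqNgt H1 muln0.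
rewrite big_nat_cond [RHS]big_nat_cond; apply: eq_bigr => i /andP [/andP [_ H] _].
by rewrite -ltnS H.
Qed.

Lemma le_sum2 K (F : 'I_K -> nat) i j : i != j -> F i + F j <= \sum_k F k.
Proof.
move=> ij; rewrite (bigD1 i) //= (bigD1 j) /=; last by rewrite eq_sym.
by rewrite addnA leq_addr.
Qed.

Lemma le_sum3 K (F : 'I_K -> nat) i j k : i != j -> i != k -> j != k ->
  F i + F j + F k <= \sum_l F l.
Proof.
move=> ij ik jk; rewrite (bigD1 i) //= (bigD1 j) /=; last by rewrite eq_sym.
rewrite (bigD1 k) /=; last by rewrite eq_sym ik /= eq_sym jk.
by rewrite !addnA leq_addr.
Qed.

Definition sm N (f : opdata N) : nat :=
  if [pick s | is_smallest_part f s] is Some s then val s else 0.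

Lemma smallest_uniq N (f : opdata N) s s' :
  is_smallest_part f s -> is_smallest_part f s' -> s = s'.
Proof.
move=> /andP [h1 /forallP h2] /andP [h1' /forallP h2'].
apply/val_inj/eqP; rewrite eqn_leq; apply/andP; split; rewrite leqNgt;
 apply/negP=> lt.
- by move: (implyP (h2 s') lt) h1' => /eqP ->.
- by move: (implyP (h2' s) lt) h1 => /eqP ->.
Qed.

Lemma smE N (f : opdata N) s : is_smallest_part f s -> sm f = s.
Proof.
move=> Hs; rewrite /sm; case: pickP => [s' H'|H].
  by rewrite (smallest_uniq H' Hs).
by rewrite H in Hs.
Qed.
Definition Fm n (x : opdata n * bool) : opdata (2 * n) :=
  [ffun v : 'I_(2 * n).+1 =>
     (if (v == sm x.1 + n :> nat) then (inord 1, x.2)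
      else if v <= n then (inord (mn x.1 v - (v == sm x.1 :> nat)), overlined x.1 (inord v))
      else (ord0, false)) : 'I_(2 * n).+1 * bool].

Definition Gm n (g : opdata (2 * n)) : opdata n * bool :=
  ([ffun v : 'I_n.+1 =>
     (inord (mn g v + (v == sm g :> nat)), overlined g (inord v)) : 'I_n.+1 * bool],
   overlined g (inord (sm g + n))).

Definition inA m n (f : opdata n) :=
  is_overpartition f && [exists s, is_smallest_part f s && (m <= mult f s)].

Definition inB m n (g : opdata (2 * n)) :=
  is_overpartition g &&
      [exists s : 'I_(2 * n).+1, exists t : 'I_(2 * n).+1,
         [&& is_smallest_part g s, is_largest_part g t, m.-1 <= mult g s &
             (t - s == n)%N]].

Arguments inA : clear implicits.
Arguments inB : clear implicits.

Lemma mn_le N (f : opdata N) v : mn f v <= N.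
Proof. by rewrite -ltnS; exact: ltn_ord. Qed.

Lemma multF n (x : opdata n * bool) (v : 'I_(2*n).+1) : 0 < n ->
  mult (Fm x) v = if (v == sm x.1 + n :> nat) then 1
                  else if v <= n then mn x.1 v - (v == sm x.1 :> nat) else 0.
Proof.
move=> n0; rewrite /mult ffunE; case: ifP => _; first by rewrite /= inordK //; lia.
case: ifP => vn //=; rewrite inordK //; have := mn_le x.1 v; lia.
Qed.

Lemma ovF n (x : opdata n * bool) (v : 'I_(2*n).+1) :
  overlined (Fm x) v = if (v == sm x.1 + n :> nat) then x.2
                  else if v <= n then overlined x.1 (inord v) else false.
Proof. by rewrite /overlined ffunE; case: ifP => _ //; case: ifP. Qed.

Lemma A_facts m n (f : opdata n) : 2 <= m -> inA m n f ->
  exists s : 'I_n.+1, sm f = s /\ 0 < s /\ m <= mn f s /\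
    (forall v, v < s -> mn f v = 0) /\
    (mn f 0 = 0 /\ overlined f (inord 0) = false) /\
    (forall v : 'I_n.+1, overlined f v -> 0 < mn f v) /\
    \sum_(v < n.+1) v * mn f v = n.
Proof.
move=> m2 /andP [/and3P [P1 P2 P3] /existsP [s /andP [Hs ms]]].
have h0 : mn f 0 = 0 /\ overlined f (inord 0) = false.
  move: (implyP (forallP P1 (inord 0))); rewrite inordK // eqxx => /(_ isT).
  by case/andP => /eqP h /negbTE ->; rewrite /mn h.
exists s; do !split => //.
- exact: smE.
- case: (posnP s) => // s0.
  have e : mult f s = mn f 0 by rewrite -mnE s0.
  by case: h0 e => -> _ e; move: Hs => /andP []; rewrite e.
- by rewrite mnE.
- move=> v vs; move: Hs => /andP [_ /forallP /(_ (inord v))].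
  by rewrite inordK ?vs //= => [/eqP|]; [|move: (ltn_ord s); lia].
- by move=> v /(implyP (forallP P2 v)); rewrite mnE.
- by rewrite -sumE; apply/eqP.
Qed.

Lemma F_small m n (x : opdata n * bool) : 0 < n -> 2 <= m -> inA m n x.1 ->
  exists s : 'I_n.+1, sm x.1 = s /\ is_smallest_part (Fm x) (inord s) /\
     m.-1 <= mult (Fm x) (inord s) /\ sm (Fm x) = s.
Proof.
move=> n0 m2 /(A_facts m2) [s [sE [s1 [ms [below _]]]]].
have sn : s <= n by rewrite -ltnS.
have sv : (inord s : 'I_(2 * n).+1) = s :> nat by rewrite inordK //; lia.
have Hs : is_smallest_part (Fm x) (inord s).
  apply/andP; split.
    rewrite multF // sv sE.
    rewrite (_ : (s == s + n :> nat) = false); last lia.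
    by rewrite sn eqxx; lia.
  apply/forallP => v; apply/implyP; rewrite sv.
  move=> vs; rewrite multF // sE.
  rewrite (_ : (v == s + n :> nat) = false); last lia.
  rewrite (_ : (v <= n) = true); last lia.
  by rewrite below // (_ : (v == s :> nat) = false) //; lia.
exists s; split => //; split => //; split; last by rewrite (smE Hs) sv.
rewrite multF // sv sE.
rewrite (_ : (s == s + n :> nat) = false); last lia.
by rewrite sn eqxx; lia.
Qed.

Lemma FinB m n (x : opdata n * bool) : 0 < n -> 2 <= m -> inA m n x.1 ->
  inB m n (Fm x).
Proof.
move=> n0 m2 xA.
have [s [sE [Hs [ms smE']]]] := F_small n0 m2 xA.
have [s' [sE' [s1 [ms' [below [[f0 o0] [P2 P3]]]]]]] := A_facts m2 xA.
have ss' : s' = s by apply: ord_inj; rewrite -sE -sE'.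
subst s'.
have sn : s <= n by rewrite -ltnS.
apply/andP; split.
  apply/and3P; split.
  - apply/forallP => v; apply/implyP => /eqP v0.
    rewrite multF // ovF // sE v0 (_ : (0 == s + n) = false); last lia.
    by rewrite /= f0 o0.
  - apply/forallP => v; apply/implyP; rewrite multF // ovF //.
    case: ifP => // _; case: ifP => // vn ov.
    have := P2 (inord v); rewrite /mn inordK // => /(_ ov).
    rewrite /mn in ms'; rewrite sE; case: eqP => [e|ne]; last lia.
    by rewrite e; lia.
  - have pw : forall v : 'I_(2 * n).+1, mult (Fm x) v + (v == s :> nat) =
        (if v <= n then mn x.1 v else 0) + (v == s + n :> nat).
      move=> v; rewrite multF // sE.
      case: eqP => [e|ne]; first by rewrite e; case: ifP => h; lia.
      case: ifP => vn; last by rewrite (_ : (v == s :> nat) = false); lia.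
      case: eqP => [e|ne2]; last lia.
      by rewrite e; lia.
    have e : \sum_(v < (2 * n).+1) v * mult (Fm x) v + \sum_(v < (2 * n).+1) v * (v == s :> nat)
       = \sum_(v < (2 * n).+1) v * (if v <= n then mn x.1 v else 0) + \sum_(v < (2 * n).+1) v * (v == s + n :> nat).
      by rewrite -!big_split; apply: eq_bigr => v _ /=; rewrite -!mulnDr pw.
    rewrite !sum_delta in e; try lia.
    rewrite sum_widen in e; last lia.
    rewrite P3 in e; apply/eqP; lia.
apply/existsP; exists (inord s); apply/existsP; exists (inord (s + n)).
rewrite Hs ms /= !inordK; try lia.
rewrite (_ : s + n - s == n) ?andbT; last lia.
apply/andP; split.
  by rewrite multF // inordK ?sE ?eqxx //; lia.
apply/forallP => v; apply/implyP; rewrite inordK; last lia.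
move=> vs; rewrite multF // sE.
rewrite (_ : (v == s + n :> nat) = false); last lia.
by rewrite (_ : (v <= n) = false) //; lia.
Qed.

Lemma GF m n (x : opdata n * bool) : 0 < n -> 2 <= m -> inA m n x.1 ->
  Gm (Fm x) = x.
Proof.
move=> n0 m2 xA.
have [s [sE [Hs [ms smE']]]] := F_small n0 m2 xA.
have [s' [sE' [s1 [ms' _]]]] := A_facts m2 xA.
have ss' : s' = s by apply: ord_inj; rewrite -sE -sE'.
subst s'; clear sE'.
have sn : s <= n by rewrite -ltnS.
rewrite /Gm smE'; case: x xA sE ms' Hs ms smE' => f b xA /= sE ms' Hs ms smE'.
congr pair; last first.
  rewrite ovF /= inordK; last lia.
  by rewrite sE eqxx.
apply/ffunP => v; rewrite ffunE /mn multF // ovF // inordK /=; last first.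
  have := ltn_ord v; lia.
rewrite sE (_ : (v == s + n :> nat) = false); last by have := ltn_ord v; lia.
rewrite (_ : (v <= n) = true); last by have := ltn_ord v; lia.
rewrite (_ : mn f v - (v == s :> nat) + (v == s :> nat) = mn f v); last first.
  by case: eqP => [e|]; [rewrite e; lia | lia].
rewrite mnE /mult /overlined !inord_val.
by case: (f v).
Qed.

Lemma B_facts m n (g : opdata (2 * n)) : 0 < n -> 2 <= m -> inB m n g ->
  exists s : 'I_(2 * n).+1, sm g = s /\ 0 < s /\ s <= n /\ m.-1 <= mult g s /\
    (forall v : 'I_(2 * n).+1, v < s -> mult g v = 0) /\
    (forall v : 'I_(2 * n).+1, v = 0 :> nat -> mult g v = 0 /\ overlined g v = false) /\
    (forall v : 'I_(2 * n).+1, overlined g v -> 0 < mult g v) /\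
    (forall v : 'I_(2 * n).+1, v = s + n :> nat -> mult g v = 1) /\
    (forall v : 'I_(2 * n).+1, n < v -> v <> s + n :> nat -> mult g v = 0) /\
    (forall v : 'I_(2 * n).+1, v <= n -> mult g v + (v == s :> nat) <= n) /\
    \sum_(v < n.+1) v * mn g v + s = n.
Proof.
move=> n0 m2 /andP [/and3P [P1 P2 P3] /existsP [s /existsP [t /and4P [Hs Ht ms /eqP ts]]]].
have P1' : forall v : 'I_(2 * n).+1, v = 0 :> nat -> mult g v = 0 /\ overlined g v = false.
  move=> v v0; move: (implyP (forallP P1 v)); rewrite v0 eqxx => /(_ isT).
  by case/andP => /eqP -> /negbTE ->.
have s1 : 0 < s.
  case: (posnP s) => // s0; have [h _] := P1' s s0.
  by move: Hs => /andP []; rewrite h.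
have tE : t = s + n :> nat by lia.
have msp : 0 < mult g s by case/andP: Hs.
have mtp : 0 < mult g t by case/andP: Ht.
move/eqP: P3 => P3.
have st : s != t by rewrite -val_eqE /= tE; lia.
have H2 := le_sum2 (fun v : 'I_(2 * n).+1 => v * mult g v) st.
rewrite P3 /= tE in H2.
have mt1 : mult g t = 1 by nia.
have big : forall v : 'I_(2 * n).+1, v != s -> v != t ->
    s * mult g s + (s + n) * mult g t + v * mult g v <= 2 * n.
  move=> v vs vt.
  have := le_sum3 (fun v : 'I_(2 * n).+1 => v * mult g v) st
     (_ : s != v) (_ : t != v).
  by rewrite P3 /= tE eq_sym vs eq_sym vt => /(_ isT isT).
have tv : forall v : 'I_(2 * n).+1, v = s + n :> nat -> v = t.
  by move=> v e; apply: ord_inj; rewrite e tE.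
have hi : forall v : 'I_(2 * n).+1, n < v -> v <> s + n :> nat -> mult g v = 0.
  move=> v nv vt; have := big v; rewrite -!val_eqE /= tE.
  rewrite (_ : (v == s :> nat) = false); last lia.
  rewrite (_ : (v == s + n :> nat) = false); last lia.
  move=> /(_ isT isT); nia.
exists s; do !split => //.
- exact: smE.
- have := ltn_ord t; lia.
- move=> v vs; move: Hs => /andP [_ /forallP /(_ v) /implyP /(_ vs) /eqP] //.
- by move=> v /(implyP (forallP P2 v)).
- by move=> v e; rewrite (tv v e).
- move=> v vn; case: (eqVneq (v : nat) s) => [e|ne].
    have -> : v = s by apply: ord_inj.
    nia.
  rewrite addn0.
  case: (posnP v) => [v0|vp]; first by have [-> _] := P1' v v0.
  have := big v; rewrite -!val_eqE /= tE ne.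
  rewrite (_ : (v == s + n :> nat) = false); last lia.
  move=> /(_ isT isT); nia.
- have pw : forall v : 'I_(2 * n).+1,
      mult g v = (if v <= n then mn g v else 0) + (v == s + n :> nat).
    move=> v; case: ifP => vn.
      rewrite (_ : (v == s + n :> nat) = false); last lia.
      by rewrite addn0 /mn inord_val.
    case: eqP => [e|ne]; first by rewrite (tv v e) mt1.
    by rewrite hi //; lia.
  have e : \sum_(v < (2 * n).+1) v * mult g v =
      \sum_(v < (2 * n).+1) v * (if v <= n then mn g v else 0) +
      \sum_(v < (2 * n).+1) v * (v == s + n :> nat).
    by rewrite -big_split; apply: eq_bigr => v _ /=; rewrite -mulnDr -pw.
  rewrite sum_delta in e; last lia.
  rewrite sum_widen in e; last lia.
  lia.
Qed.

Lemma G_props m n (g : opdata (2 * n)) : 0 < n -> 2 <= m -> inB m n g ->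
  inA m n (Gm g).1 /\ Fm (Gm g) = g.
Proof.
move=> n0 m2 gB.
have [s [sE [s1 [sn [ms [below [P1 [P2 [mt1 [hi [bnd sum]]]]]]]]]]] := B_facts n0 m2 gB.
have iv : forall v : 'I_n.+1, (inord v : 'I_(2 * n).+1) = v :> nat.
  by move=> v; rewrite inordK //; have := ltn_ord v; lia.
have multG : forall v : 'I_n.+1, mult (Gm g).1 v = mn g v + (v == s :> nat).
  move=> v; rewrite /mult ffunE /= inordK sE // ltnS.
  have := bnd (inord v); rewrite iv; have := ltn_ord v; rewrite /mn => h1 h2.
  by apply: h2; lia.
have ovG : forall v : 'I_n.+1, overlined (Gm g).1 v = overlined g (inord v).
  by move=> v; rewrite /overlined ffunE.
have sv : (inord s : 'I_n.+1) = s :> nat by rewrite inordK //; lia.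
have Hs : is_smallest_part (Gm g).1 (inord s).
  apply/andP; split; first by rewrite multG sv eqxx; lia.
  apply/forallP => v; apply/implyP; rewrite sv => vs.
  rewrite multG /mn (_ : (v == s :> nat) = false); last lia.
  by rewrite below // iv.
have smG : sm (Gm g).1 = s by rewrite (smE Hs) sv.
split.
  apply/andP; split; last first.
    apply/existsP; exists (inord s); rewrite Hs /= multG sv eqxx /mn.
    rewrite -[s in inord s]/(nat_of_ord s) inord_val; lia.
  apply/and3P; split.
  - apply/forallP => v; apply/implyP => /eqP v0.
    rewrite multG ovG v0 (_ : (0 == s :> nat) = false); last lia.
    have [h1 h2] := P1 (inord 0 : 'I_(2 * n).+1) (inordK (ltn0Sn _)).
    by rewrite /mn h1 h2.
  - apply/forallP => v; apply/implyP; rewrite multG ovG => /P2.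
    rewrite /mn; lia.
  - apply/eqP.
    rewrite (eq_bigr (fun v : 'I_n.+1 => v * mn g v + v * (v == s :> nat))); last first.
      by move=> v _; rewrite multG mulnDr.
    rewrite big_split /= sum_delta ?sum //; lia.
apply/ffunP => v; rewrite ffunE smG ?sE /=.
case: eqP => [e|ne].
  rewrite /mult in mt1; have := mt1 v e.
  rewrite sE -e inord_val.
  rewrite /overlined; case: (g v) => a b /= a1; congr pair.
  by apply/eqP; rewrite -val_eqE /= a1 inordK //; lia.
case: ifP => vn.
  have vv : (inord v : 'I_n.+1) = v :> nat by rewrite inordK.
  rewrite /mn multG ovG vv.
  rewrite (_ : mn g v + (v == s :> nat) - (v == s :> nat) = mn g v); last lia.
  rewrite mnE /mult /overlined !inord_val.
  by case: (g v).
have nv : n < v by rewrite ltnNge vn.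
have h0 := hi v nv ne.
case E: (g v) => [a b]; congr pair.
  by apply: ord_inj; rewrite /mult E in h0; rewrite /= h0.
by case: b E => // E; have := P2 v; rewrite /overlined E h0 => /(_ isT).
Qed.

Theorem theorem5p3 (n m : nat) (hn : 1 <= n) (hm : 2 <= m) :
  2 * abar m n = abar2 m.-1 (2 * n) n.
Proof.
have -> : abar m n = #|[set f : opdata n | inA m n f]| by [].
have -> : abar2 m.-1 (2 * n) n = #|[set g : opdata (2 * n) | inB m n g]| by [].
set A := [set f : opdata n | inA m n f].
set B := [set g : opdata (2 * n) | inB m n g].
set D := setX A [set: bool].
have cD : #|D| = 2 * #|A| by rewrite cardsX cardsT card_bool mulnC.
rewrite -cD; apply/eqP; rewrite eqn_leq; apply/andP; split.
  have injF : {in D &, injective (@Fm n)}.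
    move=> x y; rewrite !inE => /andP [xA _] /andP [yA _] e.
    by rewrite -(GF hn hm xA) -(GF hn hm yA) e.
  rewrite -(card_in_imset injF); apply: subset_leq_card; apply/subsetP => y.
  case/imsetP => x; rewrite !inE => /andP [xA _] ->.
  exact: FinB.
have injG : {in B &, injective (@Gm n)}.
  move=> x y; rewrite !inE => xB yB e.
  by rewrite -(G_props hn hm xB).2 -(G_props hn hm yB).2 e.
rewrite -(card_in_imset injG); apply: subset_leq_card; apply/subsetP => y.
case/imsetP => x; rewrite !inE => xB ->.
by rewrite (G_props hn hm xB).1.
Qed.
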